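(* Let $\alpha: I\to M$ be a unit-speed curve on an oriented surface $M\subset E^3$ with Darboux frame $\{T,V,U\}$ and curvatures $k_g,k_n,\tau_g$. Consider the curve $\gamma$ defined in either of the following two cases: (a) $k_n\equiv0$, $c_4,c_5$ real constants, and $\gamma(s)=\alpha(s)+(c_4-s)T(s)+c_5U(s)$; (b) $k_n$ nowhere zero, $\theta$ an antiderivative of $k_n$, $S$ and $C$ antiderivatives of $\sin\theta$ and $\cos\theta$ respectively, $c_6,c_7$ real constants, $$y_3=c_6\cos\theta+c_7\sin\theta-S\cos\theta+C\sin\theta,\qquad y_1=-\sin\theta\,(S-c_6)-\cos\theta\,(C+c_7),$$ and $\gamma(s)=\alpha(s)+y_1(s)T(s)+y_3(s)U(s)$. In either case assume $\gamma$ is regular. Then $\gamma$ is a general helix if and only if $\alpha$ is a relatively normal-slant helix on $M$.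
   Context: $M$ is an oriented surface in Euclidean 3-space $E^3$ and $\alpha:I\to M$ is a unit-speed curve with arc-length parameter $s$. Its Darboux frame $\{T,V,U\}$ consists of the unit tangent $T=\alpha'$, the unit surface normal $U$ of $M$ along $\alpha$, and $V=U\times T$; it satisfies $T'=k_gV+k_nU$, $V'=-k_gT+\tau_gU$, $U'=-k_nT-\tau_gV$, where $k_g,k_n,\tau_g$ are the geodesic curvature, normal curvature and geodesic torsion. A regular curve is a general helix if its unit tangent makes a constant angle with a fixed direction. $\alpha$ is a relatively normal-slant helix if $\langle V,d\rangle$ is constant for some fixed unit vector $d$. *)

(* Defs.v *)
From Stdlib Require Import Reals.
From Coquelicot Require Import Coquelicot.
Open Scope R_scope.

Definition vec : Type := (R * R * R)%type.
Definition vx (v : vec) : R := fst (fst v).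
Definition vy (v : vec) : R := snd (fst v).
Definition vz (v : vec) : R := snd v.
Definition mkv (x y z : R) : vec := (x, y, z).
Definition vzero : vec := mkv 0 0 0.
Definition vadd (u v : vec) : vec := mkv (vx u + vx v) (vy u + vy v) (vz u + vz v).
Definition vscal (c : R) (v : vec) : vec := mkv (c * vx v) (c * vy v) (c * vz v).
Definition dot (u v : vec) : R := vx u * vx v + vy u * vy v + vz u * vz v.
Definition cross (u v : vec) : vec :=
  mkv (vy u * vz v - vz u * vy v) (vz u * vx v - vx u * vz v) (vx u * vy v - vy u * vx v).
Definition vnorm (v : vec) : R := sqrt (dot v v).
Definition angle (u v : vec) : R := acos (dot u v / (vnorm u * vnorm v)).

Definition is_derive_v (f : R -> vec) (s : R) (l : vec) : Prop :=
  is_derive (fun t => vx (f t)) s (vx l) /\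
  is_derive (fun t => vy (f t)) s (vy l) /\
  is_derive (fun t => vz (f t)) s (vz l).
Definition ex_derive_v (f : R -> vec) (s : R) : Prop :=
  ex_derive (fun t => vx (f t)) s /\ ex_derive (fun t => vy (f t)) s /\
  ex_derive (fun t => vz (f t)) s.
Definition Derive_v (f : R -> vec) (s : R) : vec :=
  mkv (Derive (fun t => vx (f t)) s) (Derive (fun t => vy (f t)) s)
      (Derive (fun t => vz (f t)) s).

Definition inI (a b : Rbar) (s : R) : Prop := Rbar_lt a s /\ Rbar_lt s b.

Definition regular (a b : Rbar) (g : R -> vec) : Prop :=
  forall s, inI a b s -> ex_derive_v g s /\ Derive_v g s <> vzero.

Definition unit_tangent (g : R -> vec) (s : R) : vec :=
  vscal (/ vnorm (Derive_v g s)) (Derive_v g s).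

Definition general_helix (a b : Rbar) (g : R -> vec) : Prop :=
  exists d : vec, d <> vzero /\
    exists phi : R, forall s, inI a b s -> angle (unit_tangent g s) d = phi.

Definition rel_normal_slant_helix (a b : Rbar) (V : R -> vec) : Prop :=
  exists d : vec, vnorm d = 1 /\
    exists c : R, forall s, inI a b s -> dot (V s) d = c.

(* Darboux frame data of a unit-speed curve alpha on an oriented surface,
   U being the unit surface normal along alpha *)
Definition darboux_curve (a b : Rbar) (alpha T V U : R -> vec)
    (kg kn tg : R -> R) : Prop :=
  forall s, inI a b s ->
    is_derive_v alpha s (T s) /\
    vnorm (T s) = 1 /\ vnorm (U s) = 1 /\ dot (T s) (U s) = 0 /\
    V s = cross (U s) (T s) /\
    is_derive_v T s (vadd (vscal (kg s) (V s)) (vscal (kn s) (U s))) /\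
    is_derive_v V s (vadd (vscal (- kg s) (T s)) (vscal (tg s) (U s))) /\
    is_derive_v U s (vadd (vscal (- kn s) (T s)) (vscal (- tg s) (V s))) /\
    continuous kg s /\ continuous kn s /\ continuous tg s.

Definition case_a (a b : Rbar) (alpha T U : R -> vec) (kn : R -> R)
    (g : R -> vec) : Prop :=
  (forall s, inI a b s -> kn s = 0) /\
  exists c4 c5 : R, forall s, inI a b s ->
    g s = vadd (alpha s) (vadd (vscal (c4 - s) (T s)) (vscal c5 (U s))).

Definition case_b (a b : Rbar) (alpha T U : R -> vec) (kn : R -> R)
    (g : R -> vec) : Prop :=
  (forall s, inI a b s -> kn s <> 0) /\
  exists (theta S C : R -> R) (c6 c7 : R),
    (forall s, inI a b s ->
       is_derive theta s (kn s) /\ is_derive S s (sin (theta s)) /\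
       is_derive C s (cos (theta s))) /\
    forall s, inI a b s ->
      let y3 := c6 * cos (theta s) + c7 * sin (theta s)
                - S s * cos (theta s) + C s * sin (theta s) in
      let y1 := - sin (theta s) * (S s - c6) - cos (theta s) * (C s + c7) in
      g s = vadd (alpha s) (vadd (vscal y1 (T s)) (vscal y3 (U s))).

(* Main.v *)
Require Import Defs.
From Stdlib Require Import Reals Lra Psatz Classical.
From Coquelicot Require Import Coquelicot.
Open Scope R_scope.

Lemma dplus (f g : R -> R) x df dg : is_derive f x df -> is_derive g x dg ->
  is_derive (fun t => f t + g t) x (df + dg).
Proof. intros H1 H2. exact (is_derive_plus f g x df dg H1 H2). Qed.
Lemma dminus (f g : R -> R) x df dg : is_derive f x df -> is_derive g x dg ->
  is_derive (fun t => f t - g t) x (df - dg).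
Proof. intros H1 H2. exact (is_derive_minus f g x df dg H1 H2). Qed.
Lemma dmult (f g : R -> R) x df dg : is_derive f x df -> is_derive g x dg ->
  is_derive (fun t => f t * g t) x (df * g x + f x * dg).
Proof. intros H1 H2. exact (is_derive_mult f g x df dg H1 H2 Rmult_comm). Qed.
Lemma dsin (f : R -> R) x df : is_derive f x df ->
  is_derive (fun t => sin (f t)) x (df * cos (f x)).
Proof. intros H. exact (is_derive_comp sin f x _ df (is_derive_sin (f x)) H). Qed.
Lemma dcos (f : R -> R) x df : is_derive f x df ->
  is_derive (fun t => cos (f t)) x (df * - sin (f x)).
Proof. intros H. exact (is_derive_comp cos f x _ df (is_derive_cos (f x)) H). Qed.
Lemma dconst (c : R) x : is_derive (fun _ => c) x 0.
Proof. exact (is_derive_const c x). Qed.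
Lemma did x : is_derive (fun t : R => t) x 1.
Proof. exact (is_derive_id x). Qed.

Lemma inI_loc a b s : inI a b s -> locally s (inI a b).
Proof.
  intros H. apply (open_and (T:=R_UniformSpace) (fun u : R => Rbar_lt a u) (fun u : R => Rbar_lt u b)).
  - apply open_Rbar_gt.
  - apply open_Rbar_lt.
  - exact H.
Qed.

Lemma inI_conv a b s1 s2 z : inI a b s1 -> inI a b s2 -> s1 <= z <= s2 -> inI a b z.
Proof.
  intros [H1 H2] [H3 H4] [H5 H6]. split.
  - destruct a; simpl in *; try lra; auto.
  - destruct b; simpl in *; try lra; auto.
Qed.

Lemma dot_one v : vnorm v = 1 -> dot v v = 1.
Proof.
  unfold vnorm. intros H. rewrite <- (sqrt_sqrt (dot v v)).
  - rewrite H. ring.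
  - unfold dot. nra.
Qed.

Lemma lagrange u v : dot (cross u v) (cross u v) = dot u u * dot v v - dot u v ^ 2.
Proof. unfold dot, cross, vx, vy, vz, mkv; simpl; ring. Qed.

Lemma dot_nonneg v : 0 <= dot v v.
Proof. unfold dot. nra. Qed.

Lemma cs u v : dot u v ^ 2 <= dot u u * dot v v.
Proof. pose proof (lagrange u v). pose proof (dot_nonneg (cross u v)). lra. Qed.

Lemma vnorm_scal e v : vnorm (vscal e v) = Rabs e * vnorm v.
Proof.
  unfold vnorm. replace (dot (vscal e v) (vscal e v)) with (e^2 * dot v v).
  - rewrite sqrt_mult.
    + f_equal. rewrite <- sqrt_Rsqr_abs. unfold Rsqr. f_equal; ring.
    + nra.
    + apply dot_nonneg.
  - unfold dot, vscal, vx, vy, vz, mkv; simpl; ring.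
Qed.

Lemma dot_scal e u v : dot (vscal e u) v = e * dot u v.
Proof. unfold dot, vscal, vx, vy, vz, mkv; simpl; ring. Qed.

Lemma no_cross a b (f : R -> R) s1 s2 :
  (forall s, inI a b s -> continuous f s) -> (forall s, inI a b s -> f s <> 0) ->
  inI a b s1 -> inI a b s2 -> s1 < s2 -> f s1 < 0 -> 0 < f s2 -> False.
Proof.
  intros Hc Hn H1 H2 Hlt Hf1 Hf2.
  destruct (Ranalysis5.IVT_interv f s1 s2) as [z [Hz Hfz]]; auto.
  - intros z Hz. apply continuity_pt_filterlim. apply Hc. exact (inI_conv a b s1 s2 z H1 H2 Hz).
  - exact (Hn z (inI_conv a b s1 s2 z H1 H2 Hz) Hfz).
Qed.

Lemma sign_const a b (f : R -> R) s1 s2 :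
  (forall s, inI a b s -> continuous f s) -> (forall s, inI a b s -> f s <> 0) ->
  inI a b s1 -> inI a b s2 -> 0 < f s1 * f s2.
Proof.
  intros Hc Hn H1 H2.
  assert (Hc' : forall s, inI a b s -> continuous (fun t => - f t) s).
  { intros s Hs. apply (continuous_opp f s). auto. }
  assert (Hn' : forall s, inI a b s -> - f s <> 0).
  { intros s Hs. specialize (Hn s Hs). lra. }
  pose proof (Hn s1 H1). pose proof (Hn s2 H2).
  destruct (Rlt_or_le 0 (f s1 * f s2)) as [Hp|Hp]; auto. exfalso.
  destruct (total_order_T s1 s2) as [[Hl|He]|Hg].
  - destruct (Rlt_or_le (f s1) 0).
    + apply (no_cross a b f s1 s2); auto. destruct (Rlt_or_le 0 (f s2)); auto.
      nra.
    + apply (no_cross a b (fun t => - f t) s1 s2); auto.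
      * assert (f s1 > 0) by lra. lra.
      * assert (f s1 > 0) by lra. nra.
  - subst. nra.
  - destruct (Rlt_or_le (f s2) 0).
    + apply (no_cross a b f s2 s1); auto. destruct (Rlt_or_le 0 (f s1)); auto.
      nra.
    + apply (no_cross a b (fun t => - f t) s2 s1); auto.
      * assert (f s2 > 0) by lra. lra.
      * assert (f s2 > 0) by lra. nra.
Qed.

Definition sg (x : R) := x / Rabs x.

Lemma sg_cases x : x <> 0 -> (0 < x /\ sg x = 1) \/ (x < 0 /\ sg x = -1).
Proof.
  intros H. unfold sg. destruct (Rlt_or_le 0 x).
  - left. rewrite Rabs_right by lra. split; auto. field; lra.
  - right. rewrite Rabs_left by lra. split; [lra|]. field; lra.
Qed.

Lemma sg_eq a b (f : R -> R) s1 s2 :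
  (forall s, inI a b s -> continuous f s) -> (forall s, inI a b s -> f s <> 0) ->
  inI a b s1 -> inI a b s2 -> sg (f s1) = sg (f s2).
Proof.
  intros Hc Hn H1 H2. pose proof (sign_const a b f s1 s2 Hc Hn H1 H2).
  destruct (sg_cases (f s1) (Hn _ H1)) as [[? ->]|[? ->]];
  destruct (sg_cases (f s2) (Hn _ H2)) as [[? ->]|[? ->]]; nra.
Qed.

Lemma vscal_scal x y v : vscal x (vscal y v) = vscal (x * y) v.
Proof. unfold vscal, vx, vy, vz, mkv; simpl; f_equal; [f_equal|]; ring. Qed.

Lemma nz_pos d : d <> vzero -> 0 < dot d d.
Proof.
  intros H. destruct d as [[x y] z]. unfold dot, vx, vy, vz; simpl.
  destruct (Req_dec x 0); [destruct (Req_dec y 0); [destruct (Req_dec z 0)|]|].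
  - subst. exfalso. apply H. reflexivity.
  - nra.
  - nra.
  - nra.
Qed.

Lemma main_gen a b (g V : R -> vec) (f : R -> R) :
  (forall s, inI a b s -> dot (V s) (V s) = 1) ->
  (forall s, inI a b s -> Derive_v g s = vscal (f s) (V s)) ->
  (forall s, inI a b s -> f s <> 0) -> (forall s, inI a b s -> continuous f s) ->
  (general_helix a b g <-> rel_normal_slant_helix a b V).
Proof.
  intros HV HD Hn Hc.
  assert (HVn : forall s, inI a b s -> vnorm (V s) = 1).
  { intros s Hs. unfold vnorm. rewrite HV by auto. apply sqrt_1. }
  assert (HU : forall s, inI a b s -> unit_tangent g s = vscal (sg (f s)) (V s)).
  { intros s Hs. unfold unit_tangent. rewrite HD by auto. rewrite vnorm_scal, HVn by auto.
    rewrite vscal_scal. unfold sg. f_equal. field. apply Rabs_no_R0. auto. }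
  assert (HA : forall s d, inI a b s -> angle (unit_tangent g s) d
                 = acos (sg (f s) * dot (V s) d / vnorm d)).
  { intros s d Hs. unfold angle. rewrite HU by auto. rewrite dot_scal, vnorm_scal, HVn by auto.
    f_equal. destruct (sg_cases (f s) (Hn s Hs)) as [[_ ->]|[_ ->]].
    - rewrite Rabs_R1. f_equal. ring.
    - rewrite Rabs_left by lra. f_equal. field. }
  destruct (classic (exists s0, inI a b s0)) as [[s0 Hs0]|Hno].
  2:{ split; intros _.
      - exists (mkv 1 0 0). split.
        + unfold vnorm, dot, vx, vy, vz, mkv; simpl. replace (1*1+0*0+0*0) with 1 by ring. apply sqrt_1.
        + exists 0. intros s Hs. exfalso. eauto.
      - exists (mkv 1 0 0). split.
        + intro H. injection H. lra.
        + exists 0. intros s Hs. exfalso. eauto. }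
  split.
  - intros [d [Hd [phi Hphi]]].
    pose proof (nz_pos d Hd) as Hdd.
    assert (Hnd : 0 < vnorm d) by (apply sqrt_lt_R0; auto).
    assert (Hsq : vnorm d * vnorm d = dot d d) by (apply sqrt_sqrt; lra).
    exists (vscal (/ vnorm d) d). split.
    + rewrite vnorm_scal. rewrite Rabs_right.
      * field. lra.
      * left. apply Rinv_0_lt_compat. auto.
    + exists (sg (f s0) * cos phi). intros s Hs.
      specialize (Hphi s Hs). rewrite HA in Hphi by auto.
      set (x := sg (f s) * dot (V s) d / vnorm d) in *.
      assert (Hx : -1 <= x <= 1).
      { pose proof (cs (V s) d) as Hcs. rewrite HV in Hcs by auto.
        assert (x * x <= 1).
        { unfold x. destruct (sg_cases (f s) (Hn s Hs)) as [[_ ->]|[_ ->]].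
          - replace (1 * dot (V s) d / vnorm d * (1 * dot (V s) d / vnorm d))
              with (dot (V s) d ^ 2 / (vnorm d * vnorm d)) by (field; lra).
            rewrite Hsq. apply Rmult_le_reg_r with (dot d d); auto.
            field_simplify; lra.
          - replace (-1 * dot (V s) d / vnorm d * (-1 * dot (V s) d / vnorm d))
              with (dot (V s) d ^ 2 / (vnorm d * vnorm d)) by (field; lra).
            rewrite Hsq. apply Rmult_le_reg_r with (dot d d); auto.
            field_simplify; lra. }
        nra. }
      assert (Hcx : x = cos phi) by (rewrite <- Hphi; symmetry; apply cos_acos; auto).
      rewrite <- (sg_eq a b f s s0 Hc Hn Hs Hs0).
      rewrite <- Hcx. unfold x.
      replace (dot (V s) (vscal (/ vnorm d) d)) with (dot (V s) d / vnorm d)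
        by (unfold dot, vscal, vx, vy, vz, mkv; simpl; field; lra).
      destruct (sg_cases (f s) (Hn s Hs)) as [[_ ->]|[_ ->]]; field; lra.
  - intros [d [Hd [c Hc']]].
    exists d. split.
    + intro H. subst. unfold vnorm, dot, vzero, vx, vy, vz, mkv in Hd; simpl in Hd.
      replace (0*0+0*0+0*0) with 0 in Hd by ring. rewrite sqrt_0 in Hd. lra.
    + exists (acos (sg (f s0) * c)). intros s Hs. rewrite HA by auto.
      rewrite Hd, Hc' by auto. rewrite (sg_eq a b f s s0 Hc Hn Hs Hs0). f_equal. field.
Qed.

Lemma comp_d (A Tt Uu y1 y3 : R -> R) s tA dT dU y1' y3' :
  is_derive A s tA -> is_derive Tt s dT -> is_derive Uu s dU ->
  is_derive y1 s y1' -> is_derive y3 s y3' ->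
  is_derive (fun x => A x + (y1 x * Tt x + y3 x * Uu x)) s
    (tA + ((y1' * Tt s + y1 s * dT) + (y3' * Uu s + y3 s * dU))).
Proof.
  intros. apply dplus; auto. apply dplus; apply dmult; auto.
Qed.

Lemma deq (f : R -> R) (x l lp : R) : is_derive f x l -> @eq R l lp -> is_derive f x lp.
Proof. intros H ->. exact H. Qed.

Lemma deriv_gamma a b (alpha T V U : R -> vec) (kg kn tg : R -> R) (g : R -> vec)
  (y1 y3 : R -> R) s y1' y3' :
  darboux_curve a b alpha T V U kg kn tg -> inI a b s ->
  (forall x, inI a b x -> g x = vadd (alpha x) (vadd (vscal (y1 x) (T x)) (vscal (y3 x) (U x)))) ->
  is_derive y1 s y1' -> is_derive y3 s y3' ->
  1 + y1' - kn s * y3 s = 0 -> y1 s * kn s + y3' = 0 ->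
  Derive_v g s = vscal (y1 s * kg s - y3 s * tg s) (V s).
Proof.
  intros HD Hs Hg Hy1 Hy3 E1 E2.
  destruct (HD s Hs) as (Ha & _ & _ & _ & _ & HT & _ & HU & _).
  destruct Ha as (Ha1 & Ha2 & Ha3). destruct HT as (HT1 & HT2 & HT3).
  destruct HU as (HU1 & HU2 & HU3).
  assert (Hl := inI_loc a b s Hs).
  assert (y1' = kn s * y3 s - 1) by lra. assert (y3' = - (y1 s * kn s)) by lra. subst y1' y3'.
  unfold Derive_v, vscal, mkv. f_equal; [f_equal|].
  - apply is_derive_unique.
    eapply is_derive_ext_loc; [| eapply deq; [apply (comp_d _ _ _ _ _ s _ _ _ _ _ Ha1 HT1 HU1 Hy1 Hy3)|]].
    + eapply filter_imp; [| exact Hl]. intros x Hx. simpl. rewrite (Hg x Hx). reflexivity.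
    + unfold vadd, vscal, mkv, vx, vy, vz in *; simpl in *. ring.
  - apply is_derive_unique.
    eapply is_derive_ext_loc; [| eapply deq; [apply (comp_d _ _ _ _ _ s _ _ _ _ _ Ha2 HT2 HU2 Hy1 Hy3)|]].
    + eapply filter_imp; [| exact Hl]. intros x Hx. simpl. rewrite (Hg x Hx). reflexivity.
    + unfold vadd, vscal, mkv, vx, vy, vz in *; simpl in *. ring.
  - apply is_derive_unique.
    eapply is_derive_ext_loc; [| eapply deq; [apply (comp_d _ _ _ _ _ s _ _ _ _ _ Ha3 HT3 HU3 Hy1 Hy3)|]].
    + eapply filter_imp; [| exact Hl]. intros x Hx. simpl. rewrite (Hg x Hx). reflexivity.
    + unfold vadd, vscal, mkv, vx, vy, vz in *; simpl in *. ring.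
Qed.

Lemma dopp (f : R -> R) x df : is_derive f x df -> is_derive (fun t => - f t) x (- df).
Proof. intros H. exact (is_derive_opp f x df H). Qed.

Lemma gen_thm a b (alpha T V U : R -> vec) (kg kn tg : R -> R) (g : R -> vec)
  (y1 y3 y1' y3' : R -> R) :
  darboux_curve a b alpha T V U kg kn tg -> regular a b g ->
  (forall x, inI a b x -> g x = vadd (alpha x) (vadd (vscal (y1 x) (T x)) (vscal (y3 x) (U x)))) ->
  (forall s, inI a b s -> is_derive y1 s (y1' s) /\ is_derive y3 s (y3' s) /\
     1 + y1' s - kn s * y3 s = 0 /\ y1 s * kn s + y3' s = 0) ->
  (general_helix a b g <-> rel_normal_slant_helix a b V).
Proof.
  intros HD Hr Hg Hy.
  assert (HDg : forall s, inI a b s -> Derive_v g s = vscal (y1 s * kg s - y3 s * tg s) (V s)).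
  { intros s Hs. destruct (Hy s Hs) as (A1 & A2 & A3 & A4).
    exact (deriv_gamma a b alpha T V U kg kn tg g y1 y3 s _ _ HD Hs Hg A1 A2 A3 A4). }
  apply (main_gen a b g V (fun s => y1 s * kg s - y3 s * tg s)).
  - intros s Hs. destruct (HD s Hs) as (_ & HT & HU & HTU & HV & _).
    rewrite HV, lagrange. apply dot_one in HT. apply dot_one in HU.
    rewrite HT, HU. replace (dot (U s) (T s)) with (dot (T s) (U s))
      by (unfold dot; ring). rewrite HTU. ring.
  - exact HDg.
  - intros s Hs Hf. destruct (Hr s Hs) as [_ Hne]. apply Hne. rewrite HDg by auto.
    rewrite Hf. unfold vscal, vzero, mkv. f_equal; [f_equal|]; ring.
  - intros s Hs. destruct (Hy s Hs) as (A1 & A2 & _).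
    destruct (HD s Hs) as (_ & _ & _ & _ & _ & _ & _ & _ & Hkg & _ & Htg).
    assert (C1 : continuous y1 s) by exact (@ex_derive_continuous R_AbsRing R_NormedModule y1 s (ex_intro _ _ A1)).
    assert (C3 : continuous y3 s) by exact (@ex_derive_continuous R_AbsRing R_NormedModule y3 s (ex_intro _ _ A2)).
    exact (continuous_minus (fun x => y1 x * kg x) (fun x => y3 x * tg x) s
      (continuous_mult y1 kg s C1 Hkg) (continuous_mult y3 tg s C3 Htg)).
Qed.

Theorem theorem3p17 (a b : Rbar) (alpha T V U : R -> vec) (kg kn tg : R -> R)
    (gamma : R -> vec) :
  Rbar_lt a b ->
  darboux_curve a b alpha T V U kg kn tg ->
  (case_a a b alpha T U kn gamma \/ case_b a b alpha T U kn gamma) ->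
  regular a b gamma ->
  (general_helix a b gamma <-> rel_normal_slant_helix a b V).
Proof.
  intros _ HD [[Hkn [c4 [c5 Hg]]] | [_ [theta [S [C [c6 [c7 [Hd Hg]]]]]]]] Hr.
  - apply (gen_thm a b alpha T V U kg kn tg gamma (fun x => c4 - x) (fun _ => c5)
      (fun _ => -1) (fun _ => 0)); auto.
    intros s Hs. rewrite (Hkn s Hs). split; [|split; [|split]].
    + eapply deq; [apply dminus; [apply dconst | apply did]|]. ring.
    + apply dconst.
    + ring.
    + ring.
  - set (y1 := fun x => - sin (theta x) * (S x - c6) - cos (theta x) * (C x + c7)).
    set (y3 := fun x => c6 * cos (theta x) + c7 * sin (theta x)
                - S x * cos (theta x) + C x * sin (theta x)).
    apply (gen_thm a b alpha T V U kg kn tg gamma y1 y3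
      (fun s => -1 + kn s * (- cos (theta s) * (S s - c6) + sin (theta s) * (C s + c7)))
      (fun s => kn s * (sin (theta s) * (S s - c6) + cos (theta s) * (C s + c7)))); auto.
    intros s Hs. destruct (Hd s Hs) as (D1 & D2 & D3).
    pose proof (sin2_cos2 (theta s)) as Hsc. unfold Rsqr in Hsc.
    split; [|split; [|split]].
    + unfold y1. eapply deq.
      * apply dminus; apply dmult.
        -- apply dopp. apply dsin. exact D1.
        -- apply dminus; [exact D2 | apply (dconst c6)].
        -- apply dcos. exact D1.
        -- apply dplus; [exact D3 | apply (dconst c7)].
      * cbv beta. nra.
    + unfold y3. eapply deq.
      * apply dplus; [apply dminus; [apply dplus|]|]; apply dmult.
        -- apply (dconst c6).
        -- apply dcos. exact D1.
        -- apply (dconst c7).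
        -- apply dsin. exact D1.
        -- exact D2.
        -- apply dcos. exact D1.
        -- exact D3.
        -- apply dsin. exact D1.
      * cbv beta. nra.
    + unfold y3. ring.
    + unfold y1. ring.
Qed.
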